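(* Let $\mathcal H$ be a non-binary MMP hypergraph of hypergraph-dimension $n\ge 3$ with $l$ hyperedges. Then $\mathcal H$ satisfies the e-inequalities $$l_{cM}<l\qquad\text{and}\qquad l_{cm}<l .$$
   Context: A hypergraph $\mathcal H=(V,E)$ consists of a finite vertex set $V$ and a family $E$ of subsets of $V$ (hyperedges). An MMP hypergraph of hypergraph-dimension $n\ge3$ is a connected hypergraph in which: every vertex belongs to at least one hyperedge; every hyperedge contains at least $2$ and at most $n$ vertices; no hyperedge shares only one vertex with another hyperedge; and any two hyperedges intersect in at most $n-2$ vertices. Consider $0$-$1$ assignments to the vertices and the rules: (i) no two vertices within any hyperedge are both assigned $1$; (ii) in every hyperedge not all vertices are assigned $0$. $\mathcal H$ is non-binary if no $0$-$1$ assignment satisfies both (i) and (ii), and binary otherwise. A classical assignment is a $0$-$1$ assignment satisfying rule (i) in which no further vertex can be switched from $0$ to $1$ without violating (i). For a classical assignment, the classical hyperedge number $l_c$ is the number of hyperedges containing a vertex assigned $1$; $l_{cM}$ and $l_{cm}$ denote the maximum and minimum of $l_c$ over all classical assignments. *)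

(* Defs.v *)
From mathcomp Require Import all_boot.
Set Implicit Arguments. Unset Strict Implicit. Unset Printing Implicit Defensive.

Section Hyper.
Variable V : finType.
Variable E : {set {set V}}.

Definition hadj : rel V := fun x y => [exists e in E, (x \in e) && (y \in e)].

Definition hconnected : Prop := forall x y : V, connect hadj x y.

Definition MMP (n : nat) : Prop :=
  3 <= n /\
  [/\ hconnected,
      (forall v : V, exists2 e, e \in E & v \in e),
      (forall e, e \in E -> 2 <= #|e| <= n),
      (forall e f, e \in E -> f \in E -> e != f -> #|e :&: f| != 1) &
      (forall e f, e \in E -> f \in E -> e != f -> #|e :&: f| <= n - 2)].

(* A 0-1 assignment is encoded by the set S of vertices assigned 1. *)
Definition rule_i (S : {set V}) : bool := [forall e in E, #|e :&: S| <= 1].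
Definition rule_ii (S : {set V}) : bool := [forall e in E, e :&: S != set0].

Definition non_binary : Prop := ~ exists S : {set V}, rule_i S && rule_ii S.

Definition classical (S : {set V}) : bool :=
  rule_i S && [forall v, (v \notin S) ==> ~~ rule_i (v |: S)].

Definition lc (S : {set V}) : nat := #|[set e in E | ~~ [disjoint e & S]]|.

(* maximum and minimum over classical assignments (which always exist;
   the default values 0 / #|E| are therefore never the result alone) *)
Definition lcM : nat := \max_(S : {set V} | classical S) lc S.
Definition lcm : nat := \big[minn/#|E|]_(S : {set V} | classical S) lc S.

End Hyper.

(* Main.v *)
Require Import Defs.
From mathcomp Require Import all_boot.

Lemma bigmin_le (I : eqType) (r : seq I) (P : pred I) (F : I -> nat) x z :
  z \in r -> P z -> \big[minn/x]_(i <- r | P i) F i <= F z.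
Proof.
elim: r => // i r IH; rewrite inE big_cons => /predU1P [->|zr] Pz.
  by rewrite Pz geq_minl.
case: (P i); last exact: IH.
by rewrite geq_min IH ?orbT.
Qed.

Theorem lemma5 (V : finType) (E : {set {set V}}) (n : nat) :
  MMP E n -> non_binary E ->
  lcM E < #|E| /\ lcm E < #|E|.
Proof.
move=> _ NB.
have lt : forall S, classical E S -> lc E S < #|E|.
  move=> S /andP [Ri _]; rewrite ltn_neqAle.
  have sub : [set e in E | ~~ [disjoint e & S]] \subset E.
    by apply/subsetP => e; rewrite inE => /andP [].
  rewrite /lc subset_leq_card // andbT.
  apply/negP => /eqP h.
  have hE : [set e in E | ~~ [disjoint e & S]] = E.
    by apply/eqP; rewrite eqEcard sub h leqnn.
  apply: NB; exists S; rewrite Ri /=.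
  apply/forallP => e; apply/implyP => eE.
  have : e \in [set e in E | ~~ [disjoint e & S]] by rewrite hE.
  by rewrite inE eE /= -setI_eq0.
have E0 : 0 < #|E|.
  rewrite lt0n; apply/negP => /eqP /eqP; rewrite cards_eq0 => /eqP E0.
  apply: NB; exists set0; apply/andP; split.
    by apply/forallP => e; rewrite E0 inE.
  by apply/forallP => e; rewrite E0 inE.
pose S0 := [arg max_(S > set0 | rule_i E S) #|S|].
have cS0 : classical E S0.
  rewrite /S0; case: arg_maxnP.
    by apply/forallP => e; apply/implyP => _; rewrite setI0 cards0.
  move=> S RS Smax; rewrite /classical RS /=.
  apply/forallP => v; apply/implyP => vS; apply/negP => Rv.
  have := Smax _ Rv; rewrite cardsU1 vS /=.
  by rewrite add1n ltnn.
split.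
  rewrite /lcM; elim/big_ind: _ => //.
  by move=> a b; rewrite gtn_max => -> ->.
apply: leq_ltn_trans (lt _ cS0).
by apply: bigmin_le; rewrite ?mem_index_enum.
Qed.
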